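(* Let $N\geqslant 1$. The map $\mathfrak{s}:\Lambda(N)\to\mathcal{S}(N)$, $(\mu,\nu)\mapsto[\mu+\bar{\nu},\nu_{1}]$, is a bijection.
   Context: A partition $\alpha=(\alpha_1\geqslant\alpha_2\geqslant\dots\geqslant\alpha_p>0)$ has length $\ell(\alpha)=p$; the empty partition $\varnothing$ has length $0$; set $\alpha_i=0$ for $i>\ell(\alpha)$, and for partitions $\alpha,\beta$ let $\alpha+\beta$ be the partition with parts $\alpha_i+\beta_i$. $\alpha'$ denotes the conjugate (transposed) partition. $\mathcal{P}(N)$ is the set of partitions with at most $N$ parts, and $\Lambda(N)$ is the set of pairs $(\mu,\nu)$ of partitions with $\ell(\mu)+\ell(\nu)\leqslant N$. $\mathcal{S}(N)$ is the set of equivalence classes $[\alpha,t]$ of $\mathcal{P}(N)\times\mathbb{Z}_{\geqslant 0}$ under the relation $(\alpha,t)\sim(\beta,u)$ iff $t-u=\alpha_i-\beta_i$ for all $i=1,\dots,N$. For nonempty $\beta\in\mathcal{P}(N)$ with $q=\ell(\beta')=\beta_1$, define $\bar\beta=(N-\beta'_q,\dots,N-\beta'_1)'$ (zero entries discarded), i.e. the complement of $\beta$ in the $N\times q$ rectangle rotated by $180^\circ$; set $\bar\varnothing=\varnothing$. *)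

(* Defs.v *)
From mathcomp Require Import all_boot all_order all_algebra.
Set Implicit Arguments. Unset Strict Implicit. Unset Printing Implicit Defensive.
Import GRing.Theory Num.Theory.

Definition is_partition (a : seq nat) : bool :=
  sorted geq a && all (fun x => 0 < x) a.

(* alpha_i (1-based) = part a i.+1 ... we use 0-based: part a i = alpha_{i+1},
   and part a i = 0 beyond the length *)
Definition part (a : seq nat) (i : nat) : nat := nth 0 a i.

Definition conjp (a : seq nat) : seq nat :=
  [seq count (fun x => j < x) a | j <- iota 0 (head 0 a)].

Definition addp (a b : seq nat) : seq nat :=
  mkseq (fun i => part a i + part b i) (maxn (size a) (size b)).

Definition inP (N : nat) (a : seq nat) : bool :=
  is_partition a && (size a <= N).

Definition inLambda (N : nat) (mu nu : seq nat) : bool :=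
  [&& is_partition mu, is_partition nu & size mu + size nu <= N].

(* bar beta = (N - beta'_q, ..., N - beta'_1)' (zero entries discarded);
   for beta empty this gives the empty partition. *)
Definition barp (N : nat) (b : seq nat) : seq nat :=
  conjp (filter (fun x => 0 < x) (rev [seq N - x | x <- conjp b])).

(* the equivalence on P(N) x Z_{>=0} defining S(N) *)
Definition Sequiv (N : nat) (x y : seq nat * nat) : Prop :=
  forall i, i < N ->
    (x.2%:Z - y.2%:Z = (part x.1 i)%:Z - (part y.1 i)%:Z)%R.

Definition sfun (N : nat) (mu nu : seq nat) : seq nat * nat :=
  (addp mu (barp N nu), part nu 0).

(* Main.v *)
Require Import Defs.
From mathcomp Require Import all_boot all_order all_algebra zify.
Set Implicit Arguments. Unset Strict Implicit.

Definition anti (s : seq nat) := forall i, nth 0 s i.+1 <= nth 0 s i.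

Lemma antimono s : anti s -> forall i j, i <= j -> nth 0 s j <= nth 0 s i.
Proof.
move=> H i j /subnK <-; elim: (j - i) => [|k IH] //=.
by rewrite addSn; apply: leq_trans (H _) IH.
Qed.

Lemma sorted_anti s : sorted geq s -> anti s.
Proof.
move=> /(sortedP 0) H i; case: (ltnP i.+1 (size s)) => Hi; first exact: H.
by rewrite nth_default.
Qed.

Lemma anti_sorted s : anti s -> sorted geq s.
Proof. by move=> H; apply/(sortedP 0) => i _; apply: H. Qed.

Lemma part_char a : is_partition a <->
  anti a /\ (forall i, (0 < part a i) = (i < size a)).
Proof.
rewrite /is_partition /part; split.
  move=> /andP [Hs Ha]; split; first exact: sorted_anti.
  move=> i; case: (ltnP i (size a)) => Hi.
    by move/all_nthP: Ha => /(_ 0 i Hi) ->.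
  by rewrite nth_default.
move=> [H1 H2]; apply/andP; split; first exact: anti_sorted.
by apply/(all_nthP 0) => i Hi; rewrite H2.
Qed.

Lemma count0 j s : (forall i, nth 0 s i <= j) -> count (fun x => j < x) s = 0.
Proof.
move=> H; apply/eqP; rewrite -leqn0 leqNgt -has_count; apply/hasPn => y /(nthP 0) [i Hi <-].
by rewrite -leqNgt.
Qed.

Lemma core s j k : anti s -> (j < nth 0 s k) = (k < count (fun x => j < x) s).
Proof.
elim: s k => [|x s IH] k H /=; first by rewrite nth_nil.
have Hs : anti s by move=> i; apply: (H i.+1).
have Hle : forall i, nth 0 s i <= x by move=> i; have := antimono H (leq0n i.+1); done.
case: (ltnP j x) => Hjx /=.
  case: k => [|k] /=; first by rewrite Hjx.
  by rewrite IH.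
rewrite count0 /=; last by move=> i; apply: leq_trans (Hle i) Hjx.
case: k => [|k] /=; first by rewrite ltnNge Hjx.
by apply/negbTE; rewrite -leqNgt; apply: leq_trans (Hle k) Hjx.
Qed.

Lemma anti_conjp a : anti (conjp a).
Proof.
move=> j; rewrite /conjp; case: (ltnP j.+1 (head 0 a)) => Hj.
  rewrite !(nth_map 0) ?size_iota //; last by apply: ltnW.
  rewrite !nth_iota //; last by apply: ltnW.
  by apply: sub_count => x /= /ltnW.
by rewrite nth_default // size_map size_iota.
Qed.

Lemma part_conjp a j : anti a -> part (conjp a) j = count (fun x => j < x) a.
Proof.
move=> H; rewrite /part /conjp; case: (ltnP j (head 0 a)) => Hj.
  by rewrite (nth_map 0) ?size_iota // nth_iota.
rewrite nth_default ?size_map ?size_iota //.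
have : ~~ (0 < count (fun x => j < x) a) by rewrite -core // -leqNgt; case: a H Hj.
by case: count.
Qed.

Lemma conjp_partition c : anti c -> is_partition (conjp c).
Proof.
move=> H; apply/part_char; split; first exact: anti_conjp.
move=> i; rewrite part_conjp // /conjp size_map size_iota.
by rewrite -core //; case: c H.
Qed.

Definition cseq N nu := filter (fun x => 0 < x) (rev [seq N - x | x <- conjp nu]).

Lemma cseq_anti N nu : anti (cseq N nu).
Proof.
apply: sorted_anti; apply: sorted_filter; first by move=> x y z /= h1 h2; apply: leq_trans h2 h1.
rewrite rev_sorted sorted_map.
apply: sub_sorted (anti_sorted (@anti_conjp nu)) => x y /= h.
exact: leq_sub2l.
Qed.

Lemma barp_partition N nu : is_partition (barp N nu).
Proof. exact: conjp_partition (cseq_anti N nu). Qed.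

Lemma barp_size N nu : size (barp N nu) <= N.
Proof.
rewrite /barp size_map size_iota.
have : all (fun x => x <= N) (cseq N nu).
  apply/allP => x; rewrite /cseq mem_filter mem_rev => /andP [_ /mapP [y _ ->]].
  exact: leq_subr.
by rewrite /cseq; case: (filter _ _) => [|x s] //= /andP[].
Qed.

Lemma count_geq_iota m q : m <= q -> count (fun j => m <= j) (iota 0 q) = q - m.
Proof.
move=> /subnK <-; rewrite addnK addnC iotaD count_cat add0n.
rewrite (@eq_in_count _ (fun j => m <= j) pred0 (iota 0 m)); last first.
  by move=> x; rewrite mem_iota /=; lia.
rewrite count_pred0 add0n (@eq_in_count _ (fun j => m <= j) predT) ?count_predT ?size_iota //.
by move=> x; rewrite mem_iota /=; lia.
Qed.

Lemma barp_part N nu i : is_partition nu -> size nu <= N -> i < N ->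
  part (barp N nu) i = part nu 0 - part nu (N - i.+1).
Proof.
move=> /part_char [Ha Hp] Hs Hi.
rewrite /barp -/(cseq N nu) part_conjp ?cseq_anti //. rewrite /cseq. rewrite count_filter.
rewrite (@eq_count _ _ (fun x => i < x)); last first.
  by move=> x /=; case: (ltnP i x) => //= h; apply: leq_ltn_trans h.
rewrite count_rev count_map /conjp count_map.
have -> : head 0 nu = part nu 0 by case: nu {Ha Hp Hs}.
rewrite -(count_geq_iota (m := part nu (N - i.+1))); last first.
  by rewrite /part; exact: (antimono Ha (leq0n _)).
apply: eq_count => j /=.
rewrite /part [in RHS]leqNgt core //.
apply/idP/idP; lia.
exact: cseq_anti.
Qed.

Lemma addp_part a b i : part (addp a b) i = part a i + part b i.
Proof.
rewrite /addp /part; case: (ltnP i (maxn (size a) (size b))) => h.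
  by rewrite nth_mkseq.
rewrite nth_default ?size_mkseq // !nth_default //; lia.
Qed.

Lemma addp_partition a b : is_partition a -> is_partition b -> is_partition (addp a b).
Proof.
move=> /part_char [Ha Hpa] /part_char [Hb Hpb]; apply/part_char; split.
  by move=> i; have := addp_part a b i; have := addp_part a b i.+1;
     rewrite /part => -> ->; apply: leq_add.
move=> i; rewrite addp_part /addp size_mkseq addn_gt0 Hpa Hpb; lia.
Qed.

Lemma part_eq a b : is_partition a -> is_partition b ->
  (forall i, part a i = part b i) -> a = b.
Proof.
move=> /part_char [_ Ha] /part_char [_ Hb] H.
have Hs : size a = size b.
  have h1 := Ha (size a); have h2 := Hb (size b).
  rewrite H Hb ltnn in h1; rewrite -H Ha ltnn in h2.
  apply/eqP; rewrite eqn_leq; apply/andP; split; rewrite leqNgt; apply/negP => h.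
    by rewrite h in h2.
  by rewrite h in h1.
by apply: (eq_from_nth (x0 := 0) Hs) => i _; apply: H.
Qed.

Definition tr j s := mkseq (fun k => nth 0 s k - j) (count (fun x => j < x) s).

Lemma tr_part j s k : anti s -> part (tr j s) k = nth 0 s k - j.
Proof.
move=> H; rewrite /tr /part; case: (ltnP k (count (fun x => j < x) s)) => h.
  by rewrite nth_mkseq.
rewrite nth_default ?size_mkseq //.
have : ~~ (j < nth 0 s k) by rewrite core // -leqNgt.
lia.
Qed.

Lemma tr_partition j s : anti s -> is_partition (tr j s).
Proof.
move=> H; apply/part_char; split.
  move=> k; have := tr_part j k.+1 H; have := tr_part j k H; rewrite /part => -> ->.
  by apply: leq_sub2r; apply: H.
move=> k; rewrite tr_part // /tr size_mkseq -core //; lia.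
Qed.

Lemma sfun_part N mu nu i : inLambda N mu nu -> i < N ->
  [/\ part (sfun N mu nu).1 i = part mu i + (part nu 0 - part nu (N - i.+1)),
      part nu (N - i.+1) <= part nu 0 &
      part mu i = 0 \/ part nu (N - i.+1) = 0].
Proof.
move=> /and3P [Hmu Hnu Hs] Hi.
have Hnu' := Hnu; move/part_char: Hnu' => [Ha _].
split.
- by rewrite /sfun addp_part barp_part //; lia.
- exact: (antimono Ha (leq0n _)).
case: (ltnP i (size mu)) => h.
  by right; rewrite /part nth_default //; lia.
by left; rewrite /part nth_default.
Qed.

Lemma inj N mu nu mu' nu' : inLambda N mu nu -> inLambda N mu' nu' ->
  Sequiv N (sfun N mu nu) (sfun N mu' nu') -> mu = mu' /\ nu = nu'.
Proof.
move=> H H' HS.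
have E : forall i, i < N -> part mu i = part mu' i /\ part nu (N - i.+1) = part nu' (N - i.+1).
  move=> i Hi; have := HS i Hi.
  have [e1 l1 d1] := sfun_part H Hi; have [e2 l2 d2] := sfun_part H' Hi.
  rewrite e1 e2.
  have -> : (sfun N mu nu).2 = part nu 0 by [].
  have -> : (sfun N mu' nu').2 = part nu' 0 by [].
  move=> h; case: d1 => d1; case: d2 => d2; lia.
move/and3P: H => [Hmu Hnu Hs]; move/and3P: H' => [Hmu' Hnu' Hs'].
split.
  apply: part_eq => // i; case: (ltnP i N) => hi; first by case: (E i hi).
  by rewrite /part !nth_default //; lia.
apply: part_eq => // k; case: (ltnP k N) => hk.
  have hi : N - k.+1 < N by lia.
  have := E _ hi; have -> : N - (N - k.+1).+1 = k by lia.
  by case.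
by rewrite /part !nth_default //; lia.
Qed.

Lemma wd N mu nu : inLambda N mu nu -> inP N (sfun N mu nu).1.
Proof.
move=> /and3P [Hmu Hnu Hs]; apply/andP; split.
  by apply: addp_partition => //; apply: barp_partition.
rewrite /sfun /addp size_mkseq geq_max barp_size andbT; lia.
Qed.

Lemma surj N a t : 1 <= N -> inP N a ->
  exists mu nu, inLambda N mu nu /\ Sequiv N (sfun N mu nu) (a, t).
Proof.
move=> HN /andP [Ha Hsa].
have Ha' := Ha; move/part_char: Ha' => [Han Hap].
set s := [seq t - part a (N - k.+1) | k <- iota 0 N].
have Hs : forall k, nth 0 s k = if k < N then t - part a (N - k.+1) else 0.
  move=> k; case: (ltnP k N) => h.
    by rewrite (nth_map 0) ?size_iota // nth_iota.
  by rewrite nth_default // size_map size_iota.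
have Hsan : anti s.
  move=> k; rewrite !Hs; case: (ltnP k.+1 N) => h; last by [].
  rewrite ifT; last by lia.
  apply: leq_sub2l; rewrite /part; apply: (antimono Han); lia.
exists (tr t a), (tr 0 s).
have Pmu : forall i, part (tr t a) i = part a i - t by move=> i; rewrite tr_part.
have Pnu : forall k, part (tr 0 s) k = if k < N then t - part a (N - k.+1) else 0.
  by move=> k; rewrite tr_part // subn0 Hs.
have Hmu := tr_partition t Han; have Hnu := tr_partition 0 Hsan.
have Hmu' := Hmu; have Hnu' := Hnu.
move/part_char: Hmu' => [Amu Pmup]; move/part_char: Hnu' => [Anu Pnup].
have Hsnu : size (tr 0 s) <= N.
  rewrite leqNgt -Pnup Pnu ltnn //.
have Hsmu : size (tr t a) <= N.
  rewrite leqNgt -Pmup Pmu /part nth_default //; lia.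
have Hsum : size (tr t a) + size (tr 0 s) <= N.
  set m := size (tr t a); set n := size (tr 0 s).
  rewrite leqNgt; apply/negP => Hmn.
  have hm : 0 < m by lia.
  have hn : 0 < n by lia.
  have h1 := Pmup m.-1; rewrite Pmu (ltn_predL m) hm in h1.
  have h2 := Pnup n.-1; rewrite Pnu (ltn_predL n) hn in h2.
  have e : N - n.-1.+1 = N - n by lia.
  rewrite e ifT in h2; last by lia.
  have h3 : part a m.-1 <= part a (N - n) by rewrite /part; apply: (antimono Han); lia.
  lia.
have Hl : inLambda N (tr t a) (tr 0 s) by apply/and3P.
split => // i Hi.
have [e1 _ _] := sfun_part Hl Hi.
rewrite e1.
have -> : (sfun N (tr t a) (tr 0 s)).2 = part (tr 0 s) 0 by [].
change ((a, t).2) with t; change ((a, t).1) with a.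
rewrite !Pnu Pmu HN ifT; last by lia.
have -> : N - (N - i.+1).+1 = i by lia.
have h3 : part a (N - 1) <= part a i by rewrite /part; apply: (antimono Han); lia.
lia.
Qed.

Theorem lemma1p1 (N : nat) : 1 <= N ->
  (forall mu nu, inLambda N mu nu -> inP N (sfun N mu nu).1) /\
  (forall mu nu mu' nu', inLambda N mu nu -> inLambda N mu' nu' ->
     Sequiv N (sfun N mu nu) (sfun N mu' nu') -> mu = mu' /\ nu = nu') /\
  (forall (a : seq nat) (t : nat), inP N a ->
     exists mu nu, inLambda N mu nu /\ Sequiv N (sfun N mu nu) (a, t)).
Proof.
move=> HN; split; first exact: wd.
split; first exact: inj.
by move=> a t; apply: surj.
Qed.
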